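(* Let $b(n)$ be the number of non-squashing partitions of $n$ into distinct parts. Then $b(0)=b(1)=1$, and for $m\ge1$, $b(2m)=b(2m-1)+b(m)-1$ and $b(2m+1)=b(2m)+1$. The generating function $B(x)=\sum_{n\ge0} b(n)x^n$ satisfies $$B(x)=\frac{1}{1-x}B(x^2)-\frac{x^2}{1-x^2},$$ and explicitly $$B(x)=1+\frac{x}{1-x}+\sum_{i=1}^{\infty}\frac{x^{3\cdot 2^{i-1}}}{\prod_{j=0}^{i}\left(1-x^{2^j}\right)}.$$
   Context: A partition $n=p_1+\cdots+p_k$ with $1\le p_1\le\cdots\le p_k$ is non-squashing if $p_1+\cdots+p_j\le p_{j+1}$ for all $1\le j\le k-1$. The empty partition of $0$ counts as a non-squashing partition into distinct parts. *)

(* Defs.v *)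
From Stdlib Require Import Reals.
From Coquelicot Require Import Coquelicot.
From mathcomp Require Import all_boot.

Set Implicit Arguments.
Unset Strict Implicit.
Unset Printing Implicit Defensive.

(* Non-squashing condition for a sequence p_1 <= ... <= p_k (0-indexed list):
   p_1 + ... + p_j <= p_{j+1} for all 1 <= j <= k-1. *)
Definition nonsquashing (s : seq nat) : bool :=
  all (fun j => (sumn (take j.+1 s) <= nth 0 s j.+1)%N) (iota 0 (size s).-1).

(* A partition of n into distinct parts is a finite set A of positive
   integers (all <= n) with sum n; its parts in nondecreasing order: *)
Definition parts (n : nat) (A : {set 'I_n.+1}) : seq nat :=
  sort leq [seq val i | i <- enum A].

Definition is_nsd_partition (n : nat) (A : {set 'I_n.+1}) : bool :=
  [&& (ord0 \notin A), (\sum_(i in A) val i == n)%N & nonsquashing (parts A)].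

(* b(n) = number of non-squashing partitions of n into distinct parts
   (the empty partition of 0 counts, as A = set0). *)
Definition b (n : nat) : nat := #|[set A : {set 'I_n.+1} | is_nsd_partition A]|.

Local Open Scope R_scope.

Definition bterm (x : R) (n : nat) : R := INR (b n) * x ^ n.
Definition B (x : R) : R := Series (bterm x).

Definition prodB (x : R) (i : nat) : R :=
  foldr Rmult 1 [seq 1 - x ^ (2 ^ j)%N | j <- iota 0 i.+1].

(* Main.v *)
Require Import Defs.
From Stdlib Require Import Reals Lra Lia Psatz.
From Coquelicot Require Import Coquelicot.
From mathcomp Require Import all_boot.
From mathcomp Require Import zify.

Set Implicit Arguments.
Unset Strict Implicit.
Local Open Scope nat_scope.

Lemma ns_rcons s m : nonsquashing (rcons s m) = nonsquashing s && (sumn s <= m).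
Proof.
case: s => [|y s]; first by [].
rewrite /nonsquashing size_rcons.
have -> : (size (y :: s)).+1.-1 = (size s).+1 by [].
have -> : iota 0 (size s).+1 = rcons (iota 0 (size s)) (size s).
  by rewrite -addn1 iotaD /= cats1.
rewrite all_rcons andbC; congr (_ && _).
  apply: eq_in_all => j; rewrite mem_iota add0n => /andP [_ hj].
  rewrite -cats1 takel_cat; last by rewrite /= ltnW.
  rewrite nth_cat.
  by have -> : j.+1 < size (y :: s) by [].
rewrite -cats1 take_cat.
have -> : (size s).+1 < size (y :: s) = false by rewrite /= ltnn.
rewrite nth_cat.
have -> : (size s).+1 < size (y :: s) = false by rewrite /= ltnn.
by rewrite /= subnn take0 cats0.
Qed.

Lemma mem_leq_sumn s x : x \in s -> x <= sumn s.
Proof.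
elim: s => //= y s IH; rewrite in_cons => /orP [/eqP -> | /IH h].
  exact: leq_addr.
exact: leq_trans h (leq_addl _ _).
Qed.

Lemma sumn0_nil s : 0 \notin s -> sumn s = 0 -> s = [::].
Proof.
case: s => //= x s; rewrite in_cons negb_or => /andP [hx _] /eqP.
by rewrite addn_eq0; move: hx; rewrite eq_sym => /negbTE ->.
Qed.

Lemma single_parts s r : 0 \notin s -> sumn s = r -> r \in s -> s = [:: r].
Proof.
move=> h0 hs hr; move: h0 hs; case/splitPr: hr => s1 s2.
rewrite mem_cat in_cons !negb_or sumn_cat /= => /and3P [h1 _ h2] /eqP hs.
have e1 : sumn s1 = 0 by lia.
have e2 : sumn s2 = 0 by lia.
by rewrite (sumn0_nil h1 e1) (sumn0_nil h2 e2).
Qed.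

Lemma sorted_rcons_lt s m : sorted ltn (rcons s m) = sorted ltn s && all (fun x => x < m) s.
Proof.
elim: s => [|y s IH] //=.
rewrite !(path_sortedE ltn_trans) IH all_rcons.
by case: (y < m); case: (all (ltn y) s); case: (sorted ltn s); case: (all _ s).
Qed.

Lemma parts_sorted n (A : {set 'I_n.+1}) : sorted ltn (parts A).
Proof.
rewrite ltn_sorted_uniq_leq sort_uniq (sort_sorted leq_total) andbT.
rewrite map_inj_uniq ?enum_uniq //; exact: val_inj.
Qed.

Lemma mem_parts n (A : {set 'I_n.+1}) (i : 'I_n.+1) : (val i \in parts A) = (i \in A).
Proof. by rewrite /parts mem_sort mem_map ?mem_enum //; exact: val_inj. Qed.

Lemma mem_parts_lt n (A : {set 'I_n.+1}) x : x \in parts A -> x < n.+1.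
Proof. rewrite /parts mem_sort => /mapP [i _ ->]; exact: ltn_ord. Qed.

Lemma parts_inj n : injective (@parts n).
Proof. move=> A1 A2 h; apply/setP => i; by rewrite -!mem_parts h. Qed.

Lemma sum_parts n (A : {set 'I_n.+1}) : \sum_(i in A) val i = sumn (parts A).
Proof.
rewrite /parts (perm_sumn (permEl (perm_sort _ _))) sumnE big_map big_enum //.
Qed.

Definition setof n (s : seq nat) : {set 'I_n.+1} := [set i : 'I_n.+1 | val i \in s].

Lemma parts_setof n s : sorted ltn s -> all (fun x => x < n.+1) s -> parts (setof n s) = s.
Proof.
move=> hs ha; apply: (irr_sorted_eq ltn_trans ltnn) => //; first exact: parts_sorted.
move=> x; apply/idP/idP => [hx | hx].
  have hl := mem_parts_lt hx.
  by move: hx; rewrite -[x]/(val (Ordinal hl)) mem_parts inE.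
have hl : x < n.+1 by move/allP: ha; apply.
by rewrite -[x]/(val (Ordinal hl)) mem_parts inE.
Qed.

Lemma setof_parts n (A : {set 'I_n.+1}) : setof n (parts A) = A.
Proof. by apply/setP => i; rewrite inE mem_parts. Qed.

Definition goodL n s := (0 \notin s) && (sumn s == n) && nonsquashing s.

Lemma nsd_goodL n (A : {set 'I_n.+1}) : is_nsd_partition A = goodL n (parts A).
Proof.
by rewrite /is_nsd_partition /goodL -(mem_parts A ord0) sum_parts andbA.
Qed.

Definition Sn n := [set A : {set 'I_n.+1} | is_nsd_partition A].
Definition key n (A : {set 'I_n.+1}) := n - last 0 (parts A).
Definition W n r (A' : {set 'I_r.+1}) : {set 'I_n.+1} := setof n (rcons (parts A') (n - r)).
Definition T n r := [set A' : {set 'I_r.+1} | is_nsd_partition A' && (n - r \notin parts A')].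

Lemma goodL_rcons n s m : goodL n (rcons s m) =
  [&& m != 0, m <= n, goodL (n - m) s & sumn s <= m].
Proof.
rewrite /goodL ns_rcons mem_rcons in_cons negb_or sumn_rcons.
apply/idP/idP => [/andP [/andP [/andP [h1 h0] /eqP hs] /andP [hns hsm]] |
                  /and4P [hm0 hmn /andP [/andP [h0 /eqP hs] hns] hsm]].
  rewrite eq_sym h1 h0 hns hsm /= andbT; apply/andP; split; [lia | apply/eqP; lia].
rewrite eq_sym hm0 h0 hns hsm /= andbT; apply/eqP; lia.
Qed.

Lemma key_bound n A : 0 < n -> A \in Sn n -> (key A).*2 <= n.
Proof.
rewrite /key inE nsd_goodL => hn.
case/lastP: (parts A) => [|s m].
  by rewrite /goodL => /andP [/andP [_ /eqP h] _]; rewrite /= in h; lia.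
rewrite goodL_rcons last_rcons => /and4P [_ hmn /andP [/andP [_ /eqP hs] _] hsm].
lia.
Qed.

Lemma T_all n r (A' : {set 'I_r.+1}) : r.*2 <= n -> A' \in T n r ->
  all (fun x => x < n - r) (parts A').
Proof.
rewrite inE nsd_goodL => hr /andP [/andP [/andP [_ /eqP hs] _] hnin].
apply/allP => x hx.
have := mem_leq_sumn hx; rewrite hs => hxr.
have hne : x != n - r by apply: contraNneq hnin => <-.
move: hne; rewrite neq_ltn => /orP [//|h]; lia.
Qed.

Lemma W_parts n r (A' : {set 'I_r.+1}) : r.*2 <= n -> A' \in T n r ->
  parts (W n A') = rcons (parts A') (n - r).
Proof.
move=> hr hA; have ha := T_all hr hA.
apply: parts_setof.
  by rewrite sorted_rcons_lt parts_sorted ha.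
rewrite all_rcons; apply/andP; split; first lia.
apply/allP => x hx; move/allP: ha => /(_ x hx); lia.
Qed.

Lemma W_inj n r : r.*2 <= n -> {in T n r &, injective (@W n r)}.
Proof.
move=> hr A1 A2 h1 h2 e.
apply: parts_inj; apply: (@rcons_injl _ (n - r)).
by rewrite -(W_parts hr h1) -(W_parts hr h2) e.
Qed.

Lemma image_key n r : 0 < n -> r.*2 <= n ->
  [set A in Sn n | key A == r] = (@W n r) @: T n r.
Proof.
move=> hn hr; apply/setP => A; apply/idP/idP.
  rewrite !inE nsd_goodL /key => /andP [].
  have hsort := parts_sorted A.
  have e := setof_parts A.
  case/lastP: (parts A) hsort e => [|s m] hsort e.
    by rewrite /goodL => /andP [/andP [_ /eqP h] _]; rewrite /= in h; lia.
  rewrite goodL_rcons last_rcons => /and4P [hm0 hmn hg hsm] /eqP hkey.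
  move: hsort; rewrite sorted_rcons_lt => /andP [hss hall].
  move: hg => /andP [/andP [h0 /eqP hs] hns].
  have hsr : all (fun x => x < r.+1) s.
    apply/allP => x hx; have := mem_leq_sumn hx; lia.
  apply/imsetP; exists (setof r s).
    rewrite inE nsd_goodL parts_setof // /goodL h0 hns andbT; apply/andP; split.
      apply/eqP; lia.
    have -> : n - r = m by lia.
    apply/negP => /(allP hall); rewrite ltnn //.
  rewrite /W parts_setof //.
  by have -> : n - r = m by lia.
case/imsetP => A' hA' ->.
rewrite !inE nsd_goodL /key W_parts // last_rcons goodL_rcons.
move: hA'; rewrite inE nsd_goodL => /andP [hg _].
move: (hg) => /andP [/andP [_ /eqP hs] _].
have -> : n - (n - r) = r by lia.
rewrite hg eqxx hs /= andbT; apply/and3P; split; lia.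
Qed.

Lemma T_card n r : 0 < n -> r.*2 <= n -> #|T n r| + (n == r.*2) = b r.
Proof.
move=> hn hr.
pose B := [set A' : {set 'I_r.+1} | n - r \in parts A'].
have eT : T n r = Sn r :\: B by apply/setP => A; rewrite !inE andbC.
rewrite /b -/(Sn r) -(cardsID B (Sn r)) -eT addnC; congr (_ + _).
case: (eqVneq n r.*2) => [hnr | hnr].
  have -> : Sn r :&: B = [set setof r [:: r]].
    apply/setP => A; rewrite !inE nsd_goodL.
    have -> : n - r = r by lia.
    apply/idP/idP.
      move=> /andP [/andP [/andP [h0 /eqP hs] _] hin].
      by rewrite -(setof_parts A) (single_parts h0 hs hin).
    move/eqP => ->; rewrite parts_setof //= ?ltnSn //.
    rewrite /goodL /= addn0 eqxx in_cons orbF andbT.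
    rewrite mem_seq1 eqxx andbT /nonsquashing /= andbT; apply/eqP; lia.
  by rewrite cards1.
have -> : Sn r :&: B = set0.
  apply/setP => A; rewrite !inE nsd_goodL.
  apply/negP => /andP [/andP [/andP [_ /eqP hs] _] hin].
  have := mem_leq_sumn hin; rewrite hs => h.
  move/eqP: hnr; lia.
by rewrite cards0.
Qed.

Lemma b_rec n : 0 < n -> b n + ~~ odd n = \sum_(r < n./2.+1) b r.
Proof.
move=> hn.
have hb : b n = \sum_(A in Sn n) 1 by rewrite sum1_card /b cardsE.
rewrite hb (partition_big (fun A => (inord (key A) : 'I_n./2.+1)) xpredT) //=.
have hj : forall j : 'I_n./2.+1, (val j).*2 <= n.
  by move=> j; rewrite -geq_half_double -ltnS ltn_ord.
rewrite (eq_bigr (fun j : 'I_n./2.+1 => #|T n j|)); last first.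
  move=> j _.
  rewrite sum1_card -(card_in_imset (W_inj (hj j))) -image_key //.
  apply: eq_card => A; rewrite -topredE /= !inE.
  case hA: (is_nsd_partition A) => //=.
  have {}hA : A \in Sn n by rewrite inE.
  have hk := key_bound hn hA.
  have hk' : key A < n./2.+1 by rewrite ltnS geq_half_double.
  by rewrite -val_eqE /= inordK.
rewrite [RHS](eq_bigr (fun j : 'I_n./2.+1 => #|T n j| + (n == (val j).*2))); last first.
  by move=> j _; rewrite T_card // hj.
rewrite big_split /=; congr (_ + _).
rewrite big_ord_recr /= big1 ?add0n; last first.
  move=> j _; apply/eqP; rewrite eqb0; apply/eqP => e.
  have := ltn_ord j; rewrite geq_half_double => h; lia.
have h := odd_double_half n.
case: (odd n) h => h /=; [rewrite (_ : (n == n./2.*2) = false) //; apply: negbTE; apply/eqP; lia | rewrite (_ : (n == n./2.*2) = true) //; apply/eqP; lia].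
Qed.

Lemma b0 : b 0 = 1.
Proof.
rewrite /b -/(Sn 0).
have -> : Sn 0 = [set setof 0 [::]].
  apply/setP => A; rewrite !inE nsd_goodL; apply/idP/eqP.
    move=> /andP [/andP [h0 /eqP hs] _].
    by rewrite -(setof_parts A) (sumn0_nil h0 hs).
  by move=> ->; rewrite parts_setof.
by rewrite cards1.
Qed.

Lemma b_even m : 0 < m -> b (m.*2) + 1 = \sum_(r < m.+1) b r.
Proof.
move=> hm; have := b_rec (_ : 0 < m.*2); rewrite odd_double doubleK; apply.
by rewrite double_gt0.
Qed.

Lemma b_odd m : b (m.*2.+1) = \sum_(r < m.+1) b r.
Proof.
have := b_rec (ltn0Sn (m.*2)).
have -> : (m.*2.+1)./2 = m by rewrite -add1n (half_bit_double m true).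
by rewrite /= odd_double /= addn0.
Qed.

Lemma b1 : b 1 = 1.
Proof. by have := b_odd 0; rewrite big_ord1 b0. Qed.

Lemma bE1 m : 1 <= m -> b (2 * m) + 1 = b (2 * m - 1) + b m.
Proof.
case: m => // m _.
rewrite mul2n b_even // big_ord_recr /=.
have -> : (m.+1).*2 - 1 = m.*2.+1 by rewrite doubleS; lia.
by rewrite b_odd.
Qed.

Lemma bE2 m : 1 <= m -> b (2 * m + 1) = b (2 * m) + 1.
Proof. by move=> hm; rewrite mul2n addn1 b_odd b_even. Qed.

Lemma b_pos n : 0 < b n.
Proof.
elim/ltn_ind: n => n IH.
case: n IH => [|[|n]] IH; first by rewrite b0.
  by rewrite b1.
have := odd_double_half n.+2.
set m := n.+2./2.
case: (odd n.+2) => /= h.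
  have hm : 1 <= m by lia.
  have e : n.+2 = 2 * m + 1 by lia.
  by rewrite e (bE2 hm) addn1.
have hm : 1 <= m by lia.
have e : n.+2 = 2 * m by lia.
have := bE1 hm; rewrite -e => h2.
have h3 : 0 < b m by apply: IH; lia.
have h4 : 0 < b (n.+2 - 1) by apply: IH; lia.
lia.
Qed.

Lemma b_mono n : b n <= b n.+1.
Proof.
elim/ltn_ind: n => n _.
case: n => [|n]; first by rewrite b0 b1.
have := odd_double_half n.+1.
case hodd : (odd n.+1) => /= h.
  set m := n.+1./2 in h.
  have e1 : n.+2 = 2 * m.+1 by lia.
  have e2 : n.+1 = 2 * m.+1 - 1 by lia.
  have := bE1 (ltn0Sn m); rewrite -e2 -e1 => h2.
  have := b_pos m.+1; lia.
set m := n.+1./2 in h.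
have hm : 1 <= m by lia.
have e : n.+2 = 2 * m + 1 by lia.
have e' : n.+1 = 2 * m by lia.
rewrite e e' bE2 //; lia.
Qed.

Lemma b_mono_le m n : m <= n -> b m <= b n.
Proof.
move=> hmn; rewrite -(subnKC hmn); elim: (n - m) => [|k IH]; first by rewrite addn0.
by rewrite addnS; exact: leq_trans IH (b_mono _).
Qed.

Lemma b_bound n : 0 < n -> b n <= (n./2).+1 * b (n./2).
Proof.
move=> hn; have := b_rec hn => h.
have : \sum_(r < n./2.+1) b r <= \sum_(r < n./2.+1) b (n./2).
  apply: leq_sum => r _; apply: b_mono_le; by rewrite -ltnS.
rewrite sum_nat_const card_ord; lia.
Qed.

Local Open Scope R_scope.

Lemma binom_lb d h : 0 <= d -> 1 + INR h * d + INR h * (INR h - 1) / 2 * d ^ 2 <= (1 + d) ^ h.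
Proof.
move=> hd; elim: h => [|h IH]; first by simpl; lra.
rewrite S_INR /= .
have hh : 0 <= INR h by apply: pos_INR.
have hp : 0 <= (1 + d) ^ h by apply: pow_le; lra.
have hh1 : 0 <= INR h * (INR h - 1).
  case: h {IH hh hp} => [|h]; first by simpl; lra.
  rewrite S_INR; have := pos_INR h; nra.
have h3 : 0 <= INR h * (INR h - 1) * d ^ 3 by apply: Rmult_le_pos => //; apply: pow_le.
have := Rmult_le_compat_l (1 + d) _ _ (ltac:(lra)) IH.
simpl in h3 |- *; nra.
Qed.

Lemma eventually_lin K : 1 < K -> exists H : nat, forall h : nat, (H <= h)%nat -> INR h + 1 <= K ^ h.
Proof.
move=> hK; set d := K - 1.
have hd : 0 < d by rewrite /d; lra.
have [N hN] := INR_archimed (d ^ 2) 2 (ltac:(nra)).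
exists N.+1 => h hh.
have hKd : K = 1 + d by rewrite /d; lra.
rewrite hKd; apply: Rle_trans (binom_lb h (Rlt_le _ _ hd)).
have hNh : INR N <= INR h - 1.
  have : INR N.+1 <= INR h by apply: le_INR; apply/leP.
  rewrite S_INR; lra.
have hh0 : 0 <= INR h by apply: pos_INR.
have hd2 : 0 < d ^ 2 by nra.
have h4 : (INR h - 1) * d ^ 2 >= 2.
  have : (INR h - 1) * d ^ 2 >= INR N * d ^ 2 by apply: Rmult_ge_compat_r; lra.
  lra.
have h5 : INR h * ((INR h - 1) * d ^ 2) >= INR h * 2 by apply: Rmult_ge_compat_l; lra.
have h6 : INR h * d >= 0 by nra.
have -> : INR h * (INR h - 1) / 2 * d ^ 2 = INR h * ((INR h - 1) * d ^ 2) / 2 by field.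
lra.
Qed.

Lemma sum_f_R0_ge (f : nat -> R) n N : (forall k, 0 <= f k) -> (n <= N)%nat -> f n <= sum_f_R0 f N.
Proof.
move=> hf; elim: N => [|N IH] hn.
  by move: hn; rewrite leqn0 => /eqP ->; simpl; lra.
rewrite /=; case: (leqP n N) => h.
  have := IH h; have := hf N.+1; lra.
have -> : n = N.+1 by apply/eqP; rewrite eqn_leq hn h.
have : 0 <= sum_f_R0 f N.
  elim: N {IH hn h} => [|N IH]; first exact: hf.
  rewrite /=; have := hf N.+1; lra.
lra.
Qed.

Lemma gbound K : 1 < K -> exists C, 0 < C /\ forall n, INR (b n) <= C * K ^ n.
Proof.
move=> hK; have [H hH] := eventually_lin hK.
set C := sum_f_R0 (fun n => INR (b n)) (2 * H + 1) + 1.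
have hS : 0 <= sum_f_R0 (fun n => INR (b n)) (2 * H + 1).
  elim: (2 * H + 1)%N => [|N IH] /=; first exact: pos_INR.
  have := pos_INR (b N.+1); lra.
exists C; split; first by rewrite /C; lra.
elim/ltn_ind => n IH.
case: (leqP n (2 * H + 1)) => hn.
  have h1 := @sum_f_R0_ge (fun n => INR (b n)) n _ (fun k => pos_INR _) hn.
  have h2 : 1 <= K ^ n by apply: pow_R1_Rle; lra.
  have hC : 0 < C by rewrite /C; lra.
  rewrite /C in hC |- *; simpl in h1; nra.
set h := n./2.
have hn0 : (0 < n)%N by apply: leq_ltn_trans hn.
have hHh : (H <= h)%N by rewrite /h geq_half_double; apply: ltnW; rewrite -muln2 mulnC; apply: leq_ltn_trans hn; rewrite leq_addr.
have hhn : (h < n)%N by rewrite /h -divn2 ltn_Pdiv.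
have hhh : (h + h <= n)%N.
  have := odd_double_half n; rewrite -/h -addnn; lia.
have hb := b_bound hn0; rewrite -/h in hb.
have hb' : INR (b n) <= (INR h + 1) * INR (b h).
  rewrite -S_INR -mult_INR; apply: le_INR; apply/leP; exact: hb.
have hIH := IH h hhn.
have hl := hH h hHh.
have hbh := pos_INR (b h).
have hKh : 0 <= K ^ h by apply: pow_le; lra.
apply: Rle_trans hb' _.
have hh0 : 0 <= INR h + 1 by have := pos_INR h; lra.
have hm := Rmult_le_compat _ _ _ _ hh0 hbh hl hIH.
apply: Rle_trans hm _.
rewrite (Rmult_comm C) -Rmult_assoc -pow_add Rmult_comm.
apply: Rmult_le_compat_l; first by rewrite /C; lra.
apply: Rle_pow; [lra | apply/leP; exact: hhh].
Qed.

Lemma geom_data x : Rabs x < 1 ->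
  exists C K, 0 < C /\ 1 < K /\ K * Rabs x < 1 /\ forall n, INR (b n) <= C * K ^ n.
Proof.
move=> hx; set K := 2 / (1 + Rabs x).
have ha := Rabs_pos x.
have hK : 1 < K by rewrite /K; apply/Rlt_gt/(Rmult_lt_reg_r (1 + Rabs x)); [lra|]; field_simplify; lra.
have hKx : K * Rabs x < 1.
  rewrite /K; apply: (Rmult_lt_reg_r (1 + Rabs x)); first lra.
  field_simplify; lra.
have [C [hC hb]] := gbound hK.
by exists C, K.
Qed.

Lemma bterm_abs x n : Rabs (bterm x n) = bterm (Rabs x) n.
Proof.
rewrite /bterm Rabs_mult RPow_abs Rabs_right //; apply: Rle_ge; exact: pos_INR.
Qed.

Lemma bterm_le x C K n : Rabs x <= 1 -> 0 < C -> 1 < K -> (forall n, INR (b n) <= C * K ^ n) ->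
  Rabs (bterm x n) <= C * (K * Rabs x) ^ n.
Proof.
move=> hx hC hK hb; rewrite bterm_abs /bterm Rpow_mult_distr -Rmult_assoc.
apply: Rmult_le_compat_r; first by apply: pow_le; apply: Rabs_pos.
exact: hb.
Qed.

Lemma ex_series_bterm x : Rabs x < 1 -> ex_series (bterm x).
Proof.
move=> hx; have [C [K [hC [hK [hKx hb]]]]] := geom_data hx.
apply: (ex_series_le _ (fun n => C * (K * Rabs x) ^ n)).
  move=> n; rewrite /norm /=; apply: bterm_le => //; lra.
apply: (ex_series_ext (fun n => scal C ((K * Rabs x) ^ n))) => //.
apply: ex_series_scal_l; apply: ex_series_geom.
rewrite Rabs_right; first lra.
apply: Rle_ge; apply: Rmult_le_pos; [lra | apply: Rabs_pos].
Qed.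

Lemma bR1 N : INR (b (2 * N + 2)) = INR (b (2 * N + 1)) + INR (b N.+1) - 1.
Proof.
have := bE1 (ltn0Sn N).
have -> : (2 * N.+1 = 2 * N + 2)%N by lia.
have -> : (2 * N + 2 - 1 = 2 * N + 1)%N by lia.
move=> h; have := f_equal INR h; rewrite !plus_INR /=; lra.
Qed.

Lemma bR2 N : INR (b (2 * N + 3)) = INR (b (2 * N + 2)) + 1.
Proof.
have := bE2 (ltn0Sn N).
have -> : (2 * N.+1 + 1 = 2 * N + 3)%N by lia.
have -> : (2 * N.+1 = 2 * N + 2)%N by lia.
move=> ->; rewrite plus_INR /=; lra.
Qed.

Lemma pow2m x k : (x ^ 2) ^ k = x ^ (2 * k)%N.
Proof. by rewrite -pow_mult. Qed.

Lemma fin_id x N : (1 - x) * sum_f_R0 (bterm x) (2 * N + 1) =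
  sum_f_R0 (bterm (x ^ 2)) N - (1 - x) * (sum_f_R0 (fun m => (x ^ 2) ^ m) N - 1)
  - INR (b (2 * N + 1)) * x ^ (2 * N + 2).
Proof.
elim: N => [|N IH].
  rewrite /= /bterm b0 b1 /=; ring.
have -> : (2 * N.+1 + 1 = (2 * N + 1).+2)%N by lia.
rewrite (tech5 (bterm x) (2 * N + 1).+1) (tech5 (bterm x) (2 * N + 1)).
rewrite (tech5 (bterm (x ^ 2)) N) (tech5 (fun m => (x ^ 2) ^ m) N).
rewrite /bterm -/(bterm x) -/(bterm (x ^ 2)).
have -> : ((2 * N + 1).+1 = 2 * N + 2)%N by lia.
have -> : ((2 * N + 2).+1 = 2 * N + 3)%N by lia.
have -> : (2 * N.+1 + 2 = 2 * N + 1 + 3)%N by lia.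
rewrite !pow2m bR2 bR1.
have -> : (2 * N.+1 = 2 * N + 1 + 1)%N by lia.
have e2 : (2 * N + 2 = 2 * N + 1 + 1)%N by lia.
rewrite e2 in IH *.
have -> : (2 * N + 3 = 2 * N + 1 + 2)%N by lia.
rewrite !pow_add in IH *.
set p := x ^ (2 * N + 1).
rewrite /= in IH *.
move: IH; set S1 := sum_f_R0 _ _; set S2 := sum_f_R0 _ _; set S3 := sum_f_R0 _ _.
move=> IH; lra.
Qed.

Lemma psum_lim a l : is_series a l -> is_lim_seq (sum_f_R0 a) l.
Proof.
move=> h; apply: (is_lim_seq_ext (sum_n a)); first by move=> n; rewrite sum_n_Reals.
exact: h.
Qed.

Lemma subseq21 : filterlim (fun N => (2 * N + 1)%N) eventually eventually.
Proof. apply: eventually_subseq => n; apply/ltP; lia. Qed.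

Lemma abs_sq_lt1 x : Rabs x < 1 -> Rabs (x ^ 2) < 1.
Proof.
move=> hx; rewrite -RPow_abs; have := Rabs_pos x => h0.
simpl; nra.
Qed.

Lemma feq x : Rabs x < 1 -> B x = / (1 - x) * B (x ^ 2) - x ^ 2 / (1 - x ^ 2).
Proof.
move=> hx; have hx2 := abs_sq_lt1 hx.
have hB1 := psum_lim (Series_correct _ (ex_series_bterm hx)).
have hB2 := psum_lim (Series_correct _ (ex_series_bterm hx2)).
have hG := psum_lim (is_series_geom _ hx2).
have hT := ex_series_lim_0 _ (ex_series_bterm hx).
set u := fun N => (1 - x) * sum_f_R0 (bterm x) (2 * N + 1).
have l1 : is_lim_seq u ((1 - x) * B x).
  apply: (is_lim_seq_scal_l _ (1 - x) (B x)).
  exact: (is_lim_seq_subseq _ _ _ subseq21 hB1).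
have l2 : is_lim_seq u (B (x ^ 2) - (1 - x) * (/ (1 - x ^ 2) - 1) - x * 0).
  apply: (is_lim_seq_ext (fun N => sum_f_R0 (bterm (x ^ 2)) N - (1 - x) * (sum_f_R0 (fun m => (x ^ 2) ^ m) N - 1)
     - x * bterm x (2 * N + 1))).
    move=> N; rewrite /u fin_id /bterm.
    have -> : (2 * N + 2 = (2 * N + 1).+1)%N by lia.
    rewrite /=; ring.
  apply: is_lim_seq_minus'.
    apply: is_lim_seq_minus' => //.
    apply: (is_lim_seq_scal_l _ (1 - x) (/ (1 - x ^ 2) - 1)).
    apply: is_lim_seq_minus' => //; exact: is_lim_seq_const.
  apply: (is_lim_seq_scal_l _ x 0).
  exact: (is_lim_seq_subseq _ _ _ subseq21 hT).
have := is_lim_seq_unique _ _ l1; rewrite (is_lim_seq_unique _ _ l2) => [[e]].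
have hx1 : 1 - x <> 0 by move/Rabs_def2: hx; lra.
have hx21 : 1 - x ^ 2 <> 0 by move/Rabs_def2: hx2; lra.
apply: (Rmult_eq_reg_l (1 - x)) => //.
rewrite -e; change (x * (x * 1)) with (x ^ 2); field; auto.
Qed.

Definition F x := B x - 1 - x / (1 - x).

Lemma Feq y : Rabs y < 1 -> F y = F (y ^ 2) / (1 - y) + y ^ 3 / ((1 - y) * (1 - y ^ 2)).
Proof.
move=> hy; have hy2 := abs_sq_lt1 hy.
have hy1 : 1 - y <> 0 by move/Rabs_def2: hy; lra.
have hy21 : 1 - y ^ 2 <> 0 by move/Rabs_def2: hy2; lra.
have hy21' : 1 - y * y <> 0 by simpl in hy21; rewrite Rmult_1_r in hy21.
rewrite /F (feq hy); field; auto.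
Qed.

Fixpoint Pp (x : R) (n : nat) : R :=
  match n with 0 => 1 | S k => Pp x k * (1 - x ^ (2 ^ k)%N) end.

Lemma foldr_mult_c (s : seq R) c : foldr Rmult c s = foldr Rmult 1 s * c.
Proof. elim: s => /= [|y s IH]; [ring | rewrite IH; ring]. Qed.

Lemma prodB_Pp x i : prodB x i = Pp x i.+1.
Proof.
rewrite /prodB; elim: i.+1 => [|n IH]; first by [].
have -> : iota 0 n.+1 = iota 0 n ++ [:: n] by rewrite -addn1 iotaD.
rewrite map_cat foldr_cat /= foldr_mult_c IH; ring.
Qed.

Lemma pow2_sq x k : (x ^ (2 ^ k)%N) ^ 2 = x ^ (2 ^ k.+1)%N.
Proof. by rewrite -pow_mult expnSr. Qed.

Lemma pow2_cube x k : (x ^ (2 ^ k)%N) ^ 3 = x ^ (3 * 2 ^ k)%N.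
Proof. by rewrite -pow_mult mulnC. Qed.

Lemma abs_pow2_lt1 x k : Rabs x < 1 -> Rabs (x ^ (2 ^ k)%N) < 1.
Proof.
move=> hx; rewrite -RPow_abs.
have h := Rabs_pos x.
have hk : (0 < 2 ^ k)%coq_nat by apply/ltP; exact: expn_gt0.
by case: (pow_lt_1_compat (Rabs x) (2 ^ k) (conj h hx) hk).
Qed.

Lemma Pp_neq0 x n : Rabs x < 1 -> Pp x n <> 0.
Proof.
move=> hx; elim: n => [|n IH] /=; first lra.
apply: Rmult_integral_contrapositive_currified => //.
have := abs_pow2_lt1 n hx; move/Rabs_def2; lra.
Qed.

Lemma iter_id x N : Rabs x < 1 ->
  F x = sum_f_R0 (fun i => x ^ (3 * 2 ^ i)%N / prodB x i.+1) N + F (x ^ (2 ^ N.+1)%N) / Pp x N.+1.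
Proof.
move=> hx; elim: N => [|N IH].
  rewrite /= prodB_Pp /=.
  have := Feq hx; rewrite /= => ->.
  have hx2 := abs_sq_lt1 hx.
  have hx1 : 1 - x <> 0 by move/Rabs_def2: hx; lra.
  have hx21 : 1 - x * x <> 0 by move/Rabs_def2: hx2; simpl; lra.
  field; auto.
rewrite IH tech5 prodB_Pp.
set y := x ^ (2 ^ N.+1)%N.
have hy := abs_pow2_lt1 N.+1 hx.
rewrite -/y in hy.
rewrite (Feq hy) pow2_sq pow2_cube -/y.
have hP := @Pp_neq0 x N.+1 hx.
have hy1 : 1 - y <> 0 by move/Rabs_def2: hy; lra.
have hy2 := abs_pow2_lt1 N.+2 hx.
have hy21 : 1 - x ^ (2 ^ N.+2)%N <> 0 by move/Rabs_def2: hy2; lra.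
rewrite /= -/y -pow2_sq -/y.
have hy21' : 1 - y ^ 2 <> 0 by rewrite pow2_sq.
have hP0 := @Pp_neq0 x N hx.
have hyN : 1 - x ^ (2 ^ N)%N <> 0 by have := abs_pow2_lt1 N hx; move/Rabs_def2; lra.
field; auto.
Qed.

Lemma F_bound x : Rabs x < 1 -> exists M, 0 <= M /\ forall y, Rabs y <= Rabs x -> Rabs (F y) <= M * Rabs y.
Proof.
move=> hx; have [C [K [hC [hK [hKx hb]]]]] := geom_data hx.
have ha := Rabs_pos x.
exists (C * K / (1 - K * Rabs x) + / (1 - Rabs x)); split.
  apply: Rplus_le_le_0_compat.
    apply: Rmult_le_pos; [nra | apply: Rlt_le; apply: Rinv_0_lt_compat; lra].
  apply: Rlt_le; apply: Rinv_0_lt_compat; lra.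
move=> y hy.
have hay := Rabs_pos y.
have hy1 : Rabs y < 1 by lra.
have hex := ex_series_bterm hy1.
have hexa : ex_series (fun k => Rabs (bterm y k.+1)).
  apply: (ex_series_ext (fun k => bterm (Rabs y) k.+1)); first by move=> k; rewrite bterm_abs.
  apply: (proj1 (ex_series_incr_1 (bterm (Rabs y)))); apply: ex_series_bterm; rewrite Rabs_Rabsolu; lra.
have hq : Rabs (K * Rabs x) < 1 by rewrite Rabs_right; [lra | apply: Rle_ge; nra].
have hexg : ex_series (fun k => C * K * Rabs y * (K * Rabs x) ^ k).
  apply: (ex_series_ext (fun k => scal (C * K * Rabs y) ((K * Rabs x) ^ k))) => //.
  by apply: ex_series_scal_l; apply: ex_series_geom.
have hS1 : Rabs (B y - 1) <= C * K * Rabs y / (1 - K * Rabs x).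
  rewrite /B (Series_incr_1 _ hex) /bterm b0 /= Rmult_1_r.
  have -> : 1 + Series (fun k => INR (b k.+1) * (y * y ^ k)) - 1 = Series (fun k => bterm y k.+1) by rewrite /bterm /=; ring.
  apply: Rle_trans (Series_Rabs _ hexa) _.
  apply: Rle_trans (Series_le _ (fun k => C * K * Rabs y * (K * Rabs x) ^ k) _ hexg) _.
    move=> k; split; first exact: Rabs_pos.
    apply: Rle_trans (bterm_le (k.+1) _ hC hK hb) _; first lra.
    rewrite /= Rpow_mult_distr Rpow_mult_distr.
    have h1 : Rabs y ^ k <= Rabs x ^ k by apply: pow_incr; lra.
    have h2 : 0 <= K ^ k by apply: pow_le; lra.
    have h3 : 0 <= C * K * Rabs y * K ^ k.
      apply: Rmult_le_pos => //; apply: Rmult_le_pos => //; apply: Rmult_le_pos; lra.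
    have := Rmult_le_compat_l _ _ _ h3 h1.
    have -> : C * (K * Rabs y * (K ^ k * Rabs y ^ k)) = C * K * Rabs y * K ^ k * Rabs y ^ k by ring.
    have -> : C * K * Rabs y * (K ^ k * Rabs x ^ k) = C * K * Rabs y * K ^ k * Rabs x ^ k by ring.
    by [].
  rewrite Series_scal_l Series_geom //; rewrite /Rdiv; lra.
have hS2 : Rabs (y / (1 - y)) <= / (1 - Rabs x) * Rabs y.
  have h1y : 1 - Rabs x <= Rabs (1 - y).
    have := Rabs_triang_inv 1 y; rewrite Rabs_R1; lra.
  have hne : 1 - y <> 0 by move=> e; rewrite e Rabs_R0 in h1y; lra.
  rewrite Rabs_div // /Rdiv Rmult_comm; apply: Rmult_le_compat_r => //.
  apply: Rinv_le_contravar => //; lra.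
rewrite /F.
have -> : B y - 1 - y / (1 - y) = (B y - 1) + - (y / (1 - y)) by ring.
apply: Rle_trans (Rabs_triang _ _) _; rewrite Rabs_Ropp.
have -> : (C * K / (1 - K * Rabs x) + / (1 - Rabs x)) * Rabs y =
   C * K * Rabs y / (1 - K * Rabs x) + / (1 - Rabs x) * Rabs y by rewrite /Rdiv; ring.
lra.
Qed.

Lemma pow_anti a m n : 0 <= a <= 1 -> (m <= n)%N -> a ^ n <= a ^ m.
Proof.
move=> ha hmn; rewrite -(subnKC hmn) pow_add.
have h1 : a ^ (n - m) <= 1.
  have := pow_incr a 1 (n - m) ha; rewrite pow1; lra.
have h2 : 0 <= a ^ m by apply: pow_le; lra.
have := Rmult_le_compat_l _ _ _ h2 h1; lra.
Qed.

Lemma Pp_lb x n : Rabs x < 1 -> (1 - Rabs x) ^ n <= Rabs (Pp x n).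
Proof.
move=> hx; have ha := Rabs_pos x.
elim: n => [|n IH] /=; first by rewrite Rabs_R1; lra.
rewrite Rabs_mult.
have h1 : 1 - Rabs x <= Rabs (1 - x ^ (2 ^ n)%N).
  have := Rabs_triang_inv 1 (x ^ (2 ^ n)%N); rewrite Rabs_R1 -RPow_abs.
  have : Rabs x ^ (2 ^ n)%N <= Rabs x ^ 1 by apply: pow_anti; [lra | exact: expn_gt0].
  rewrite pow_1; lra.
have h0 : 0 <= (1 - Rabs x) ^ n by apply: pow_le; lra.
rewrite Rmult_comm; apply: Rmult_le_compat => //; lra.
Qed.

Lemma t_lim a : 0 <= a < 1 -> is_lim_seq (fun n => a ^ (2 ^ n)%N * (/ (1 - a)) ^ n) 0.
Proof.
move=> ha; set c := / (1 - a).
have hc : 1 <= c by rewrite /c -Rinv_1; apply: Rinv_le_contravar; lra.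
set t := fun n => a ^ (2 ^ n)%N * c ^ n.
have ht0 : forall n, 0 <= t n.
  move=> n; apply: Rmult_le_pos; apply: pow_le; lra.
have hg := is_lim_seq_geom a (ltac:(rewrite Rabs_right; lra)).
have := proj2 (is_lim_seq_spec _ _) hg.
move=> /(_ (mkposreal (/ (2 * c)) (ltac:(apply: Rinv_0_lt_compat; lra)))) [n0 hn0].
have hn0' : a ^ n0 * c <= / 2.
  have := hn0 n0 (le_n n0); rewrite /= Rminus_0_r Rabs_right; last by apply: Rle_ge; apply: pow_le; lra.
  move=> h; have := Rmult_lt_compat_r c _ _ (ltac:(lra)) h.
  rewrite Rinv_mult Rmult_assoc Rinv_l; lra.
have hstep : forall n, (n0 <= n)%N -> t n.+1 <= / 2 * t n.
  move=> n hn; rewrite /t /= expnS mul2n -addnn pow_add.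
  have h1 : a ^ (2 ^ n)%N <= a ^ n0.
    apply: pow_anti; first lra.
    apply: leq_trans hn _; apply: ltnW; exact: ltn_expl.
  have h2 : 0 <= a ^ (2 ^ n)%N * c ^ n by apply: ht0.
  have h3 : a ^ (2 ^ n)%N * c <= / 2.
    apply: Rle_trans hn0'; apply: Rmult_le_compat_r; lra.
  have := Rmult_le_compat_r _ _ _ h2 h3.
  have -> : a ^ (2 ^ n)%N * a ^ (2 ^ n)%N * (c * c ^ n) = a ^ (2 ^ n)%N * c * (a ^ (2 ^ n)%N * c ^ n) by ring.
  by [].
have hk : forall k, t (k + n0)%N <= t n0 * (/ 2) ^ k.
  elim => [|k IH] /=; first by rewrite add0n; lra.
  apply: Rle_trans (hstep _ (leq_addl _ _)) _.
  have : / 2 * t (k + n0)%N <= / 2 * (t n0 * (/ 2) ^ k) by apply: Rmult_le_compat_l; lra.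
  lra.
apply/(is_lim_seq_incr_n _ n0).
apply: (is_lim_seq_le_le (fun _ => 0) _ (fun k => t n0 * (/ 2) ^ k)).
    by move=> k; split; [apply: ht0 | apply: hk].
  exact: is_lim_seq_const.
have := is_lim_seq_scal_l _ (t n0) 0 (is_lim_seq_geom (/ 2) (ltac:(rewrite Rabs_right; lra))).
by rewrite /= Rmult_0_r.
Qed.

Lemma series_id x : Rabs x < 1 ->
  is_series (fun i => x ^ (3 * 2 ^ i)%N / prodB x i.+1) (B x - 1 - x / (1 - x)).
Proof.
move=> hx; set a := Rabs x.
have ha : 0 <= a < 1 by split; [apply: Rabs_pos | done].
have [M [hM hF]] := F_bound hx.
set R := fun N => F (x ^ (2 ^ N.+1)%N) / Pp x N.+1.
have hR : is_lim_seq R 0.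
  apply/is_lim_seq_abs_0.
  apply: (is_lim_seq_le_le (fun _ => 0) _ (fun N => M * (a ^ (2 ^ N.+1)%N * (/ (1 - a)) ^ N.+1))).
      move=> N; split; first exact: Rabs_pos.
      have hP := @Pp_neq0 x N.+1 hx.
      have hPl := @Pp_lb x N.+1 hx.
      have hpos : 0 < (1 - a) ^ N.+1 by apply: pow_lt; lra.
      have hy : Rabs (x ^ (2 ^ N.+1)%N) = a ^ (2 ^ N.+1)%N by rewrite -RPow_abs.
      have hyx : Rabs (x ^ (2 ^ N.+1)%N) <= Rabs x.
        rewrite hy -/a; have := @pow_anti a 1 (2 ^ N.+1)%N (ltac:(lra)) (expn_gt0 _ _).
        by rewrite pow_1.
      rewrite /R Rabs_div // pow_inv /Rdiv -Rmult_assoc -hy.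
      apply: Rmult_le_compat.
      - apply: Rabs_pos.
      - apply: Rlt_le; apply: Rinv_0_lt_compat; apply: Rabs_pos_lt.
        exact: hP.
      - exact: hF.
      - by apply: Rinv_le_contravar.
    exact: is_lim_seq_const.
  have := is_lim_seq_scal_l _ M 0 (proj1 (is_lim_seq_incr_1 _ 0) (t_lim ha)).
  by rewrite /= Rmult_0_r.
have hL : is_lim_seq (fun N => F x - R N) (F x - 0) by apply: is_lim_seq_minus' => //; exact: is_lim_seq_const.
rewrite Rminus_0_r in hL.
have hL' : is_lim_seq (sum_n (fun i => x ^ (3 * 2 ^ i)%N / prodB x i.+1)) (F x).
  apply: (is_lim_seq_ext _ _ _ _ hL) => N.
  by rewrite sum_n_Reals /R (iter_id N hx); ring.
exact: hL'.
Qed.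

Theorem theorem2 :
  b 0 = 1%N /\ b 1 = 1%N /\
  (forall m : nat, (1 <= m)%N ->
     (b (2 * m) + 1 = b (2 * m - 1) + b m)%N /\
     b (2 * m + 1)%N = (b (2 * m) + 1)%N) /\
  (forall x : R, Rabs x < 1 ->
     ex_series (bterm x) /\
     B x = / (1 - x) * B (x ^ 2) - x ^ 2 / (1 - x ^ 2) /\
     is_series (fun i : nat => x ^ (3 * 2 ^ i)%N / prodB x i.+1)
               (B x - 1 - x / (1 - x))).
Proof.
split; first exact: b0.
split; first exact: b1.
split.
  by move=> m hm; split; [exact: bE1 | exact: bE2].
move=> x hx; split; first exact: ex_series_bterm.
split; first exact: feq.
exact: series_id.
Qed.
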